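(* Let $G$ be a cubic graph and let $J_1,J_2,J_3$ be three joins of $G$. For $i\in\{0,1,2,3\}$ let $E_i$ be the set of edges of $G$ contained in precisely $i$ of the sets $J_1,J_2,J_3$. Then $$|E_0|+\sum_{i=1}^3 n(J_i)=|E_2|+2|E_3|.$$
   Context: A join of a graph $H$ is a set $J\subseteq E(H)$ such that every vertex has degree of the same parity in $H$ and in the spanning subgraph $(V(H),J)$. In a cubic graph every vertex thus has degree $1$ or $3$ in a join $J$; a vertex of degree $3$ in $J$ is called a $J$-vertex, and $n(J)$ denotes the number of $J$-vertices. *)

(* Defs.v *)
(* Graphs are finite multigraphs (parallel edges and loops
   allowed): a finite vertex type V, a finite edge type E, and an endpoint map
   ends : E -> V * V.  A loop counts twice towards the degree. *)
From mathcomp Require Import all_boot.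
Set Implicit Arguments. Unset Strict Implicit. Unset Printing Implicit Defensive.

Section Graphs.
Variables (V E : finType) (ends : E -> V * V).

Definition deg (S : {set E}) (v : V) : nat :=
  \sum_(e in S) (((ends e).1 == v) + ((ends e).2 == v)).

Definition cubic : Prop := forall v : V, deg [set: E] v = 3.

Definition is_join (J : {set E}) : Prop :=
  forall v : V, odd (deg J v) = odd (deg [set: E] v).

Definition nJ (J : {set E}) : nat := #|[set v : V | deg J v == 3]|.

Definition Ei (J1 J2 J3 : {set E}) (i : nat) : {set E} :=
  [set e : E | ((e \in J1) + (e \in J2) + (e \in J3) == i)%N].
End Graphs.

(* Main.v *)
Require Import Defs.
From mathcomp Require Import all_boot.
From mathcomp Require Import zify.

Lemma card_sum (T : finType) (P : pred T) :
  #|[set x | P x]| = \sum_(x : T) (P x : nat).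
Proof.
rewrite -sum1_card big_mkcond /=; apply: eq_bigr => x _; rewrite inE.
by case: (P x).
Qed.

Lemma card_sumA (T : finType) (A : {set T}) :
  #|A| = \sum_(x : T) (x \in A : nat).
Proof.
rewrite -sum1_card big_mkcond /=; apply: eq_bigr => x _.
by case: (x \in A).
Qed.

Lemma sum_eqv (T : finType) (a : T) : \sum_(v : T) (a == v : nat) = 1.
Proof.
rewrite (bigD1 a) //= eqxx big1 // => v /negPf; rewrite eq_sym => ->.
done.
Qed.

Lemma handshake (V E : finType) (ends : E -> V * V) (S : {set E}) :
  \sum_(v : V) deg ends S v = 2 * #|S|.
Proof.
rewrite /deg exchange_big /= -sum1_card big_distrr /=.
apply: eq_bigr => e _; by rewrite big_split /= !sum_eqv.
Qed.

Lemma deg_le (V E : finType) (ends : E -> V * V) (S : {set E}) v :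
  deg ends S v <= deg ends [set: E] v.
Proof. by rewrite /deg (big_setID (A:=[set: E]) S) /= setTI leq_addr. Qed.

Theorem proposition2p1 (V E : finType) (ends : E -> V * V)
    (J1 J2 J3 : {set E}) :
  cubic ends -> is_join ends J1 -> is_join ends J2 -> is_join ends J3 ->
  (#|Ei J1 J2 J3 0| + (nJ ends J1 + nJ ends J2 + nJ ends J3) =
   #|Ei J1 J2 J3 2| + 2 * #|Ei J1 J2 J3 3|)%N.
Proof.
move=> Hc H1 H2 H3.
have degJ : forall J, is_join ends J ->
    \sum_(v : V) deg ends J v = #|V| + 2 * nJ ends J.
  move=> J HJ; rewrite /nJ card_sum -sum1_card big_distrr -big_split /=.
  apply: eq_bigr => v _.
  have := HJ v; have := @deg_le V E ends J v; rewrite Hc => hle hodd.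
  move: hodd hle; case: (deg ends J v) => [|[|[|[|n]]]] //.
have A1 := handshake V E ends J1; have A2 := handshake V E ends J2;
have A3 := handshake V E ends J3; have AT := handshake V E ends [set: E].
rewrite (degJ _ H1) in A1; rewrite (degJ _ H2) in A2;
rewrite (degJ _ H3) in A3.
have B : \sum_(v : V) deg ends [set: E] v = 3 * #|V|.
  rewrite (eq_bigr (fun _ => 3)); last by move=> v _; exact: Hc.
  by rewrite sum_nat_const mulnC.
rewrite B cardsT in AT.
have C : (#|J1| + #|J2| + #|J3| =
   #|Ei J1 J2 J3 1| + 2 * #|Ei J1 J2 J3 2| + 3 * #|Ei J1 J2 J3 3|)%N.
  rewrite /Ei !card_sum !big_distrr !card_sumA -!big_split /=.
  apply: eq_bigr => e _.
  by case: (e \in J1); case: (e \in J2); case: (e \in J3).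
have D : #|E| = (#|Ei J1 J2 J3 0| + #|Ei J1 J2 J3 1| + #|Ei J1 J2 J3 2|
   + #|Ei J1 J2 J3 3|)%N.
  rewrite /Ei !card_sum -!big_split /= -sum1_card.
  apply: eq_bigr => e _.
  by case: (e \in J1); case: (e \in J2); case: (e \in J3).
move: A1 A2 A3 AT C D.
move: (nJ ends J1) (nJ ends J2) (nJ ends J3) (#|V|) (#|E|) (#|J1|) (#|J2|) (#|J3|)
  (#|Ei J1 J2 J3 0|) (#|Ei J1 J2 J3 1|) (#|Ei J1 J2 J3 2|) (#|Ei J1 J2 J3 3|).
move=> *; lia.
Qed.
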